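(* Let $d>1$ be an integer and write $d=2^n3^mb$ with $\gcd(b,6)=1$. Let $a$ be an integer with $0\le a<d$, and let $f$ be the multiplicative order of $3/2$ modulo $b$. Then for every positive integer $x$ not divisible by $3$ there exists an admissible vector $s\in\mathcal{E}(x)$ with $v_s(x)\equiv a\pmod d$ and $l(s)\le 2(b-1)f+n+1$.
   Context: Let $T_0^{-1}(x)=2x$ and $T_1^{-1}(x)=(2x-1)/3$, viewed as maps $\mathbb{Q}\to\mathbb{Q}$. For $s=(s_0,s_1,\dots,s_k)$ with $k\ge 0$ and all $s_i$ nonnegative integers, the length of $s$ is $l(s)=k$ and $v_s=T_0^{-s_0}\circ T_1^{-1}\circ T_0^{-s_1}\circ T_1^{-1}\circ\cdots\circ T_1^{-1}\circ T_0^{-s_k}$ (with $k$ occurrences of $T_1^{-1}$). The vector $s$ is admissible for a positive integer $x$ if $v_s(x)$ is a positive integer; $\mathcal{E}(x)$ denotes the set of vectors admissible for $x$. *)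

(* Defs.v *)
From HB Require Import structures.
From mathcomp Require Import all_boot all_order all_algebra.
Set Implicit Arguments. Unset Strict Implicit. Unset Printing Implicit Defensive.
Import Order.TTheory GRing.Theory Num.Theory.
Local Open Scope ring_scope.

Definition T0inv (x : rat) : rat := 2 * x.
Definition T1inv (x : rat) : rat := (2 * x - 1) / 3.

(* A vector s = (s_0, s_1, ..., s_k) is represented as s_0 :: [s_1; ...; s_k].
   v_s = T0^{-s_0} o T1^{-1} o T0^{-s_1} o ... o T1^{-1} o T0^{-s_k}. *)
Fixpoint vs_aux (s0 : nat) (t : seq nat) (x : rat) : rat :=
  match t with
  | [::] => iter s0 T0inv x
  | s1 :: t' => iter s0 T0inv (T1inv (vs_aux s1 t' x))
  end.

(* v_s for s : seq nat (s must be nonempty; the empty seq is not a vector) *)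
Definition vs (s : seq nat) (x : rat) : rat :=
  match s with
  | [::] => x
  | s0 :: t => vs_aux s0 t x
  end.

Definition len (s : seq nat) : nat := (size s).-1.

Definition admissible (x : nat) (s : seq nat) : Prop :=
  (0 < size s)%N /\ exists m : nat, (0 < m)%N /\ vs s x%:R = m%:R.

(* f is the multiplicative order of 3/2 modulo b (b coprime to 6):
   the least f > 0 with (3/2)^f = 1 mod b, i.e. 3^f = 2^f mod b. *)
Definition is_order32 (b f : nat) : Prop :=
  (0 < f)%N /\ 3 ^ f = 2 ^ f %[mod b] /\
  (forall g : nat, (0 < g)%N -> 3 ^ g = 2 ^ g %[mod b] -> (f <= g)%N).

(* Main.v *)
Require Import Defs.
From HB Require Import structures.
From mathcomp Require Import all_boot all_order all_algebra all_fingroup all_solvable.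
From mathcomp Require Import zify ring.
Set Implicit Arguments. Unset Strict Implicit. Unset Printing Implicit Defensive.
Import Order.TTheory GRing.Theory Num.Theory.
Local Open Scope ring_scope.

Definition cg (m a b : int) := exists k : int, a = b + k * m.

Lemma cg_refl m a : cg m a a. Proof. by exists 0; ring. Qed.
Lemma cg_sym m a b : cg m a b -> cg m b a.
Proof. by case=> k ->; exists (-k); ring. Qed.
Lemma cg_trans m a b c : cg m a b -> cg m b c -> cg m a c.
Proof. by case=> k ->; case=> l ->; exists (k + l); ring. Qed.
Lemma cg_add m a b c d : cg m a b -> cg m c d -> cg m (a + c) (b + d).
Proof. by case=> k ->; case=> l ->; exists (k + l); ring. Qed.
Lemma cg_mul m a b c d : cg m a b -> cg m c d -> cg m (a * c) (b * d).
Proof. by case=> k ->; case=> l ->; exists (k * d + b * l + k * l * m); ring. Qed.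
Lemma cg_exp m a b n : cg m a b -> cg m (a ^+ n) (b ^+ n).
Proof. move=> h; elim: n => [|n IH]; first exact: cg_refl.
by rewrite !exprS; apply: cg_mul. Qed.
Lemma cg_multiple m a k : cg m (a + k * m) a.
Proof. by exists k. Qed.
Lemma cg_dvd m m' a b : cg (m * m') a b -> cg m a b.
Proof. by case=> k ->; exists (k * m'); ring. Qed.
Lemma cg_pow3 (R K : nat) a b : (R <= K)%N -> cg (3 ^+ K) a b -> cg (3 ^+ R) a b.
Proof. move=> h; rewrite -(subnKC h) exprD; exact: cg_dvd. Qed.

Lemma PoszX (n k : nat) : Posz (n ^ k) = (Posz n) ^+ k.
Proof. by rewrite -!natz natrX. Qed.

Lemma cg_nat (m x y : nat) : (x = y %[mod m])%N <-> cg m%:Z x%:Z y%:Z.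
Proof.
split=> [h|[k hk]].
  exists ((x %/ m)%:Z - (y %/ m)%:Z).
  rewrite {1}(divn_eq x m) {1}(divn_eq y m) h !PoszD !PoszM; ring.
apply/eqP; rewrite -(@eqr_nat int) !natz -!modz_nat hk.
by rewrite addrC modzMDl.
Qed.


Lemma cg3_mul1 a b : cg 3 a 1 -> cg 3 b 1 -> cg 3 (a * b) 1.
Proof. by move=> ha hb; have := cg_mul ha hb; rewrite mulr1. Qed.

Lemma pow3 (g w : int) (r : nat) : g = 1 + 3 ^+ r.+1 * w -> cg 3 w 1 ->
  forall i, exists wi, g ^+ (3 ^ i)%N = 1 + 3 ^+ (r.+1 + i) * wi /\ cg 3 wi 1.
Proof.
move=> hg hw; elim=> [|i [wi [hi hwi]]].
  by exists w; rewrite expn0 expr1 addn0.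
rewrite expnSr exprM hi addnS; pose X : int := 3 ^+ (r + i).
have e1 : 3 ^+ (r.+1 + i) = 3 * X by rewrite addSn exprS.
have e2 : 3 ^+ (r.+1 + i).+1 = 3 * (3 * X) by rewrite exprS e1.
rewrite e2 e1.
exists (wi + 3 * X * wi ^+ 2 + X * (3 * X) * wi ^+ 3); split.
  ring.
case: hwi => k ->; exists (k + X * (1 + k * 3) ^+ 2 + X * X * (1 + k * 3) ^+ 3); ring.
Qed.

Lemma gen (g w : int) (r : nat) : g = 1 + 3 ^+ r.+1 * w -> cg 3 w 1 ->
  forall i (y z : int), cg 3 y 1 -> cg (3 ^+ r.+1) y z ->
  exists t : nat, cg (3 ^+ (r.+1 + i)) (g ^+ t * y) z.
Proof.
move=> hg hw; elim=> [|i IH] y z hy hyz.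
  by exists 0%N; rewrite addn0 expr0 mul1r.
have [t [k hk]] := IH y z hy hyz.
have [wi [hh hwi]] := pow3 hg hw i.
have hgt : cg 3 (g ^+ t * y) 1.
  have hg1 : cg 3 g 1 by rewrite hg exprS; exists (3 ^+ r * w); ring.
  by have := cg_exp t hg1; rewrite expr1n => h; exact: cg3_mul1.
case: hgt => e he.
case: hwi => w' hw'.
set p := g ^+ t * y in hk he.
pose X : int := 3 ^+ (r + i).
have e1 : 3 ^+ (r.+1 + i) = 3 * X by rewrite addSn exprS.
have e2 : 3 ^+ (r.+1 + i.+1) = 3 * (3 * X) by rewrite addnS addSn !exprS.
rewrite e1 in hh hk; rewrite e2.
set h := g ^+ (3 ^ i)%N in hh.
have hz : z = p - k * (3 * X) by rewrite hk; ring.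
have [q hq] : exists q, k = q * 3 + (k %% 3)%Z by exists (k %/ 3)%Z; exact: divz_eq.
have h0 : 0 <= (k %% 3)%Z by apply: modz_ge0.
have h3 : (k %% 3)%Z < 3 by apply: ltz_pmod.
set rho := (k %% 3)%Z in hq h0 h3.
have : rho = 0 \/ rho = 1 \/ rho = 2 by lia.
case=> [r0|[r1|r2]].
- exists t; exists q; rewrite -/p hz hq r0; ring.
- exists (t + (3 ^ i) * 2)%N.
  rewrite exprD exprM -/h (_ : g ^+ t * h ^+ 2 * y = h ^+ 2 * p); last by rewrite /p; ring.
  rewrite hh hz hq r1.
  exists (1 + 2 * w' + 2 * e + 6 * w' * e + q + X * (1 + w' * 3) ^+ 2 * p).
  rewrite he hw'; ring.
- exists (t + (3 ^ i) * 1)%N.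
  rewrite exprD exprM -/h (_ : g ^+ t * h ^+ 1 * y = h ^+ 1 * p); last by rewrite /p; ring.
  rewrite hh hz hq r2.
  exists (1 + w' + e + 3 * w' * e + q).
  rewrite he hw'; ring.
Qed.

Lemma prim (x R : nat) : ~~ (3 %| x)%N -> (0 < R)%N ->
  exists q : nat, cg (3 ^+ R) (2 ^+ q * x%:Z) (-2).
Proof.
move=> hx hR.
have hg : (4 : int) = 1 + 3 ^+ 0.+1 * 1 by [].
have hw : cg 3 1 1 by exact: cg_refl.
have hx3 : (x %% 3 = 1 \/ x %% 3 = 2)%N.
  have : (x %% 3 < 3)%N by apply: ltn_pmod.
  have : (x %% 3 != 0)%N by move: hx; rewrite /dvdn.
  lia.
have eR : (0.+1 + R.-1 = R)%N by rewrite add1n prednK.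
case: hx3 => hx3.
- have hy : cg 3 x%:Z 1.
    by have := (proj1 (cg_nat 3 x 1)); rewrite /= => h; apply: h; rewrite hx3.
  have hyz : cg (3 ^+ 0.+1) x%:Z (-2).
    by apply: (cg_trans hy); exists 1; ring.
  have [t ht] := gen hg hw R.-1 hy hyz.
  exists (2 * t)%N; rewrite eR in ht.
  by rewrite exprM (_ : (2 : int) ^+ 2 = 4) // expr2.
- have hy : cg 3 (2 * x%:Z) 1.
    have h1 : cg 3 x%:Z 2.
      by have := (proj1 (cg_nat 3 x 2)); rewrite /= => h; apply: h; rewrite hx3.
    by have := cg_mul (cg_refl 3 2) h1 => h2; apply: (cg_trans h2); exists 1; ring.
  have hyz : cg (3 ^+ 0.+1) (2 * x%:Z) (-2).
    by apply: (cg_trans hy); exists 1; ring.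
  have [t ht] := gen hg hw R.-1 hy hyz.
  exists (2 * t).+1; rewrite eR in ht.
  by rewrite exprS exprM (_ : (2 : int) ^+ 2 = 4) ?expr2 // (mulrC 2) -mulrA.
Qed.


Definition Estep (b c α u : nat) : nat := (c * (2 ^ α * u + b.-1)) %% b.
Definition traj (b c : nat) (αs : seq nat) (u : nat) : nat :=
  foldl (fun u α => Estep b c α u) u αs.

Lemma cg_mod (m x : nat) : cg m%:Z (x %% m)%N%:Z x%:Z.
Proof. by apply/cg_nat; rewrite modn_mod. Qed.

Lemma modn_cg (m x z : nat) : (z < m)%N -> cg m%:Z x%:Z z%:Z -> (x %% m)%N = z.
Proof. by move=> hz /cg_nat ->; rewrite modn_small. Qed.

Section Reach.
Variables (b1 c h : nat).
Local Notation b := b1.+1.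
Hypotheses (hc : (3 * c = 1 %[mod b])%N) (hh : (2 * h = 1 %[mod b])%N).

Lemma Pb : Posz b = Posz b1 + 1. Proof. by rewrite -addn1 PoszD. Qed.

Let hc' : exists k : int, 3 * (c%:Z) = 1 + k * b.
Proof. by have /cg_nat := hc; rewrite PoszM. Qed.
Let hh' : exists k : int, 2 * (h%:Z) = 1 + k * b.
Proof. by have /cg_nat := hh; rewrite PoszM. Qed.

Definition fE α (u : 'I_b) : 'I_b := Ordinal (ltn_pmod (c * (2 ^ α * u + b1)) (ltn0Sn b1)).
Definition fA (u : 'I_b) : 'I_b := Ordinal (ltn_pmod (2 * u) (ltn0Sn b1)).
Definition fAi (u : 'I_b) : 'I_b := Ordinal (ltn_pmod (h * u) (ltn0Sn b1)).
Definition fB (u : 'I_b) : 'I_b := Ordinal (ltn_pmod (3 * u + 1) (ltn0Sn b1)).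
Definition fS (u : 'I_b) : 'I_b := Ordinal (ltn_pmod (u + 1) (ltn0Sn b1)).

Lemma i1 z : fB (fE 0 z) = z.
Proof.
apply: val_inj => /=; apply: modn_cg => //.
rewrite PoszD PoszM; case: (cg_mod b (c * (1 * z + b1))) => k1 ->.
rewrite PoszM PoszD mul1n; case: hc' => kc hkc.
exists (3 * k1 + kc * (z%:Z + b1%:Z) + 1).
transitivity ((3 * c%:Z) * (z%:Z + b1%:Z) + 1 + 3 * k1 * b); first ring.
rewrite hkc Pb; ring.
Qed.

Lemma i2 z : fE 0 (fB z) = z.
Proof.
apply: val_inj => /=; apply: modn_cg => //.
rewrite PoszM PoszD mul1n; case: (cg_mod b (3 * z + 1)) => k1 ->.
rewrite PoszD PoszM; case: hc' => kc hkc.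
exists (c%:Z * k1 + kc * z%:Z + c%:Z).
transitivity ((3 * c%:Z) * z%:Z + c%:Z * (1 + b1%:Z) + c%:Z * k1 * b); first ring.
rewrite hkc Pb; ring.
Qed.

Lemma i3 z : fA (fAi z) = z.
Proof.
apply: val_inj => /=; apply: modn_cg => //.
rewrite PoszM; case: (cg_mod b (h * z)) => k1 ->.
rewrite PoszM; case: hh' => kh hkh.
exists (kh * z%:Z + 2 * k1).
transitivity ((2 * h%:Z) * z%:Z + 2 * k1 * b); first ring.
rewrite hkh; ring.
Qed.

Lemma i4 z : fAi (fA z) = z.
Proof.
apply: val_inj => /=; apply: modn_cg => //.
rewrite PoszM; case: (cg_mod b (2 * z)) => k1 ->.
rewrite PoszM; case: hh' => kh hkh.
exists (kh * z%:Z + h%:Z * k1).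
transitivity ((2 * h%:Z) * z%:Z + h%:Z * k1 * b); first ring.
rewrite hkh; ring.
Qed.

Lemma i5 z : fE 0 (fA z) = fE 1 z.
Proof.
apply: val_inj => /=.
by rewrite expn0 expn1 mul1n -modnMmr -modnDml modn_mod modnDml modnMmr.
Qed.

Lemma i6 z : fA (fB (fAi (fE 0 z))) = fS z.
Proof.
apply: val_inj => /=; rewrite -(modn_small (ltn_pmod (z + 1) (ltn0Sn b1))).
apply/cg_nat; apply: (cg_trans _ (cg_sym (cg_mod _ _))); rewrite PoszD.
rewrite PoszM; case: (cg_mod b (3 * ((h * ((c * (2 ^ 0 * z + b1)) %% b)) %% b) + 1)) => k3 ->.
rewrite PoszD PoszM; case: (cg_mod b (h * ((c * (2 ^ 0 * z + b1)) %% b))) => k2 ->.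
rewrite PoszM; case: (cg_mod b (c * (2 ^ 0 * z + b1))) => k1 ->.
rewrite PoszM PoszD PoszM expn0 mul1r.
case: hc' => kc hkc; case: hh' => kh hkh.
exists ((kh + kc + kh * kc * b%:Z) * (z%:Z + b1%:Z) + 1 + 6 * h%:Z * k1 + 6 * k2 + 2 * k3).
transitivity ((2 * h%:Z) * (3 * c%:Z) * (z%:Z + b1%:Z) + 2 + (6 * h%:Z * k1 + 6 * k2 + 2 * k3) * b); first ring.
rewrite hkh hkc Pb; ring.
Qed.


Lemma pre_closed (f : 'I_b -> 'I_b) (S : {set 'I_b}) : injective f ->
  f @: S \subset S -> forall z, f z \in S -> z \in S.
Proof.
move=> fi hS z.
have e : f @: S = S by apply/eqP; rewrite eqEcard hS (card_imset _ fi) leqnn.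
by move=> hz; rewrite -e (mem_imset _ _ fi) in hz.
Qed.

Lemma rclosure (S : {set 'I_b}) u0 : u0 \in S -> fE 0 @: S \subset S ->
  fE 1 @: S \subset S -> S = setT.
Proof.
move=> h0 hE0 hE1.
have inj0 : injective (fE 0) by apply: (can_inj (g := fB)) => z; exact: i1.
have injA : injective fA by apply: (can_inj (g := fAi)) => z; exact: i4.
have hE0' z : z \in S -> fE 0 z \in S by move=> hz; apply: (subsetP hE0); apply: imset_f.
have hE1' z : z \in S -> fE 1 z \in S by move=> hz; apply: (subsetP hE1); apply: imset_f.
have hA z : z \in S -> fA z \in S.
  by move=> hz; apply: (pre_closed inj0 hE0); rewrite i5; apply: hE1'.
have hAS : fA @: S \subset S by apply/subsetP => y /imsetP [z hz ->]; apply: hA.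
have hS z : z \in S -> fS z \in S.
  move=> hz; rewrite -i6; apply: hA.
  apply: (pre_closed inj0 hE0); rewrite i2.
  apply: (pre_closed injA hAS); rewrite i3; exact: hE0'.
have hall i : (Ordinal (ltn_pmod (u0 + i) (ltn0Sn b1))) \in S.
  elim: i => [|i IH].
    by rewrite (_ : Ordinal _ = u0) // ; apply: val_inj => /=; rewrite addn0 modn_small.
  have := hS _ IH; congr (_ \in S); apply: val_inj => /=.
  by rewrite modnDml addn1 addnS.
apply/eqP; rewrite eqEsubset subsetT /=; apply/subsetP => z _.
have := hall (z + b - u0)%N; congr (_ \in S); apply: val_inj => /=.
have hu := ltn_ord u0; have hz := ltn_ord z.
by rewrite addnBA ?(leq_trans (ltnW hu)) ?leq_addl // addKn modnDr modn_small.
Qed.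

Fixpoint Rs (u0 : 'I_b) k : {set 'I_b} :=
  match k with
  | 0 => [set u0]
  | k'.+1 => Rs u0 k' :|: fE 0 @: Rs u0 k' :|: fE 1 @: Rs u0 k'
  end.

Lemma Rs_sub u0 k : Rs u0 k \subset Rs u0 k.+1.
Proof. by rewrite /= -setUA subsetUl. Qed.

Lemma Rs_u0 u0 k : u0 \in Rs u0 k.
Proof.
elim: k => [|k IH]; first by rewrite set11.
exact: (subsetP (Rs_sub u0 k)).
Qed.

Lemma Rs_grow u0 k : Rs u0 k = setT \/ (k < #|Rs u0 k|)%N.
Proof.
elim: k => [|k [IH|IH]]; first by right; rewrite cards1.
  by left; apply/eqP; rewrite eqEsubset subsetT -IH Rs_sub.
have [e|ne] := eqVneq (Rs u0 k.+1) (Rs u0 k).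
  left; rewrite e; apply: (rclosure (Rs_u0 u0 k)).
    by rewrite -{2}e /= -setUA; apply: subset_trans (subsetUr _ _); apply: subsetUl.
  by rewrite -{2}e /= subsetUr.
right; apply: (leq_ltn_trans IH); apply: proper_card.
by rewrite properEneq eq_sym ne Rs_sub.
Qed.

Lemma Rs_full u0 : Rs u0 b1 = setT.
Proof.
case: (Rs_grow u0 b1) => // hk.
apply/eqP; rewrite eqEcard subsetT cardsT card_ord.
exact: hk.
Qed.

Lemma Rs_path u0 k z : z \in Rs u0 k ->
  exists αs, (size αs <= k)%N /\ traj b c αs u0 = z.
Proof.
elim: k z => [|k IH] z /=.
  by rewrite inE => /eqP ->; exists [::].
rewrite !inE => /orP [/orP [hz|/imsetP [y hy ->]]|/imsetP [y hy ->]].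
- by have [αs [h1 h2]] := IH z hz; exists αs; split => //; apply: leqW.
- have [αs [h1 h2]] := IH y hy; exists (rcons αs 0%N); split; first by rewrite size_rcons.
  by rewrite /traj foldl_rcons -/(traj b c αs u0) h2.
- have [αs [h1 h2]] := IH y hy; exists (rcons αs 1%N); split; first by rewrite size_rcons.
  by rewrite /traj foldl_rcons -/(traj b c αs u0) h2.
Qed.

Lemma reach (u γ : nat) : exists αs, (size αs <= b1)%N /\ (traj b c αs (u %% b) = γ %% b)%N.
Proof.
pose u0 : 'I_b := Ordinal (ltn_pmod u (ltn0Sn b1)).
pose z : 'I_b := Ordinal (ltn_pmod γ (ltn0Sn b1)).
have : z \in Rs u0 b1 by rewrite Rs_full inE.
by move/Rs_path.
Qed.

End Reach.


Lemma iter_T0 s (n : nat) : iter s T0inv (n%:R) = (2 ^ s * n)%N%:R.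
Proof.
elim: s => [|s IH]; first by rewrite /= mul1n.
by rewrite iterS IH /T0inv expnS -mulnA !natrM.
Qed.

Lemma T1_nat (m n : nat) : (3 * m + 1 = 2 * n)%N -> T1inv n%:R = m%:R.
Proof.
move=> h; rewrite /T1inv.
have : ((3 * m + 1)%N%:R : rat) = (2 * n)%N%:R by rewrite h.
rewrite natrD !natrM => e.
have -> : (2 : rat) * n%:R - 1 = 3 * m%:R by rewrite -e; ring.
by field.
Qed.

Lemma vs_aux_rcons s0 t s (y : rat) :
  vs_aux s0 (rcons t s) y = vs_aux s0 t (T1inv (iter s T0inv y)).
Proof.
elim: t s0 => [|s1 t IH] s0 //=.
by rewrite IH.
Qed.

Lemma Estep_mod b c α u : Estep b c α (u %% b) = Estep b c α u.
Proof.
rewrite /Estep; apply/cg_nat; rewrite !PoszM !PoszD !PoszM.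
by case: (cg_mod b u) => k ->; exists (c%:Z * (2 ^ α)%N%:Z * k); ring.
Qed.

Lemma traj_mod b c αs u : (traj b c αs (u %% b) %% b = traj b c αs u %% b)%N.
Proof.
case: αs => [|α l] /=; first by rewrite modn_mod.
by rewrite /traj /= Estep_mod.
Qed.

Lemma vs_aux_S s t (y : rat) : vs_aux s.+1 t y = T0inv (vs_aux s t y).
Proof. by case: t => [|s1 t] //=; rewrite iterS. Qed.


Section Realize.
Variables (b1 c Ob Rp K : nat) (w inv : int).
Local Notation b := b1.+1.
Local Notation R := Rp.+1.
Hypotheses (hc : (3 * c = 1 %[mod b])%N) (hO : (2 ^ Ob = 1 %[mod b])%N)
  (hOp : (0 < Ob)%N) (hg : (2 : int) ^+ Ob = 1 + 3 ^+ R * w) (hw : cg 3 w 1)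
  (hK : (R <= K)%N) (hinv : 2 * inv = 1 + 3 ^+ K).

Definition back (αs : seq nat) (σ : int) : int :=
  foldr (fun α s => (3 * s + 1) * inv ^+ α) σ αs.

Lemma step α (u : nat) (σ' : int) : (0 < u)%N ->
  cg (3 ^+ R) (2 ^+ α * u%:Z) (3 * σ' + 1) ->
  exists e u', [/\ (0 < u')%N, (3 * u' + 1 = 2 ^ e.+1 * u)%N,
     (u' %% b = Estep b c α u)%N & cg (3 ^+ K) u'%:Z σ'].
Proof.
move=> hu h.
have hO3 : cg (3 ^+ R) (2 ^+ Ob) 1 by rewrite hg; exists w; ring.
pose y := 2 ^+ Ob * (2 ^+ α * u%:Z).
have hy : cg (3 ^+ R) y (3 * σ' + 1).
  by have := cg_mul hO3 h; rewrite mul1r.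
have hy3 : cg 3 y 1.
  have := cg_pow3 (isT : (1 <= R)%N) hy; rewrite expr1 => h1.
  by apply: (cg_trans h1); exists σ'; ring.
have [t ht] := gen hg hw (K.+1 - R) hy3 hy.
rewrite subnKC in ht; last by apply: leqW.
pose a := (α + Ob + Ob * t)%N.
have ea : (2 : int) ^+ Ob ^+ t * y = 2 ^+ a * u%:Z.
  by rewrite /y /a -exprM !exprD; ring.
rewrite ea in ht; case: ht => k hk.
pose U := σ' + k * 3 ^+ K.
have hU : 3 * U + 1 = 2 ^+ a * u%:Z by rewrite hk /U exprS; ring.
have apos : (0 < a)%N by rewrite /a; lia.
have h2a : (2 <= 2 ^ a * u)%N.
  exact: (leq_trans _ (leq_mul (leq_pexp2l (isT : (0 < 2)%N) apos) hu)).
have h2a' : (2 : int) <= 2 ^+ a * u%:Z.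
  by move: h2a; rewrite -(ler_nat int) natrM natrX [u%:R]natz.
have U1 : 1 <= U by lia.
exists a.-1, `|U|%N.
have eU : Posz `|U|%N = U by rewrite gez0_abs //; lia.
split.
- by rewrite -ltz_nat eU; lia.
- rewrite prednK //; apply/eqP; rewrite -(@eqr_nat int) !natz PoszD PoszM eU.
  by rewrite PoszM PoszX hU.
- rewrite /Estep; apply/cg_nat; apply: cg_sym.
  have hOb : cg b (2 ^+ Ob) 1 by have /cg_nat := hO; rewrite PoszX.
  have hab : cg b (2 ^+ a) (2 ^+ α).
    have := cg_mul (cg_refl b (2 ^+ α)) (cg_exp t.+1 hOb).
    by rewrite expr1n mulr1 -exprM -exprD mulnS addnA.
  case: hab => k1 hk1.
  have /cg_nat := hc; rewrite PoszM; case=> kc hkc.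
  rewrite PoszM PoszD PoszM PoszX eU.
  exists (kc * U + c%:Z - c%:Z * k1 * u%:Z).
  have -> : 2 ^+ α = 2 ^+ a - k1 * b by rewrite hk1; ring.
  transitivity (c%:Z * (3 * U + 1 + b1%:Z) - c%:Z * k1 * b * u%:Z).
    by rewrite hU; ring.
  transitivity ((3 * c%:Z) * U + c%:Z * (b1%:Z + 1) - c%:Z * k1 * b * u%:Z); first ring.
  by rewrite hkc Pb; ring.
- by rewrite eU; exists k.
Qed.


Lemma cg_2inv n : cg (3 ^+ K) ((2 * inv) ^+ n) 1.
Proof.
have h : cg (3 ^+ K) (2 * inv) 1 by rewrite hinv; exists 1; ring.
by have := cg_exp n h; rewrite expr1n.
Qed.

Lemma realize (αs : seq nat) : forall (u0 : nat) (σ : int), (0 < u0)%N ->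
  (0 < size αs)%N -> cg (3 ^+ R) u0%:Z (back αs σ) ->
  exists t uk, [/\ size t = size αs, (0 < uk)%N,
    (forall s0, vs_aux s0 t u0%:R = (2 ^ s0 * uk)%N%:R),
    cg (3 ^+ K) uk%:Z σ & (uk %% b = traj b c αs u0 %% b)%N].
Proof.
elim: αs => [//|α rest IH] u0 σ hu _ hcg.
set σ' := back rest σ.
have hst : cg (3 ^+ R) (2 ^+ α * u0%:Z) (3 * σ' + 1).
  have h1 := cg_mul (cg_refl (3 ^+ R) (2 ^+ α)) hcg.
  apply: (cg_trans h1).
  have h2 := cg_pow3 hK (cg_mul (cg_refl (3 ^+ K) (3 * σ' + 1)) (cg_2inv α)).
  rewrite mulr1 in h2; apply: cg_trans h2.
  by rewrite /= exprMn /σ' mulrCA; apply: cg_refl.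
have [e [u1 [hu1 he hb1 hs1]]] := step hu hst.
have vs1 : T1inv (iter e T0inv u0%:R) = u1%:R.
  by rewrite iter_T0; apply: T1_nat; rewrite he expnS mulnA.
move: hs1; rewrite /σ'; clear hst σ'.
case: rest IH hcg => [|β rest'] IH hcg hs1.
  exists [:: e], u1; split => //.
  - by move=> s0; rewrite /= vs1 iter_T0.
  - by rewrite /traj /= hb1 modn_mod.
have [t [uk [ht1 ht2 ht3 ht4 ht5]]] := IH u1 σ hu1 isT (cg_pow3 hK hs1).
exists (rcons t e), uk; split => //.
- by rewrite size_rcons ht1.
- by move=> s0; rewrite vs_aux_rcons vs1 ht3.
- rewrite ht5 -traj_mod hb1.
  by rewrite /traj /=.
Qed.

End Realize.


Lemma inv2_ex K : exists inv : int, 2 * inv = 1 + 3 ^+ K.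
Proof.
elim: K => [|K [i hi]]; first by exists 1.
by exists (3 * i - 1); rewrite exprS -[3 ^+ K](addKr 1) -hi; ring.
Qed.

Lemma back_ones (inv : int) K (hinv : 2 * inv = 1 + 3 ^+ K) i l σ :
  (i <= K)%N -> cg (3 ^+ i) (back inv (nseq i 1%N ++ l) σ) (-1).
Proof.
elim: i => [|i IH] hi.
  by exists (back inv l σ + 1); rewrite expr0; ring.
have [k hk] := IH (ltnW hi).
rewrite /= -/(back inv (nseq i 1%N ++ l) σ) hk.
exists (k * inv - 3 ^+ (K - i.+1)).
have eK : 3 ^+ K = 3 ^+ i.+1 * 3 ^+ (K - i.+1) :> int by rewrite -exprD subnKC.
transitivity (- (2 * inv) + 3 ^+ i.+1 * k * inv); first by rewrite !exprS expr0 mulr1; ring.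
by rewrite hinv eK; ring.
Qed.

Section LP.
Variables (b1 c h Ob Rp : nat) (w : int) (x : nat).
Local Notation b := b1.+1.
Local Notation R := Rp.+1.
Hypotheses (hc : (3 * c = 1 %[mod b])%N) (hh : (2 * h = 1 %[mod b])%N)
  (hO : (2 ^ Ob = 1 %[mod b])%N)
  (hOp : (0 < Ob)%N) (hg : (2 : int) ^+ Ob = 1 + 3 ^+ R * w) (hw : cg 3 w 1)
  (hx : (0 < x)%N) (hx3 : ~~ (3 %| x)%N).

Lemma LP (m' : nat) (γ3 : int) (γb E : nat) : exists s, [/\ (0 < size s)%N,
  (len s <= R + b1)%N & exists v : nat, [/\ (0 < v)%N, vs s x%:R = v%:R,
    cg (3 ^+ m') v%:Z γ3, cg b v%:Z γb%:Z & (2 ^ E %| v)%N]].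
Proof.
pose K := (R + m')%N.
have hK : (R <= K)%N by apply: leq_addr.
have [inv hinv] := inv2_ex K.
have [q hq] := prim hx3 (isT : (0 < R)%N).
pose pre := q :: nseq Rp 1%N.
pose y := traj b c pre x.
have [αp [hαp1 hαp2]] := reach hc hh y γb.
pose αs := pre ++ αp.
pose P := (Ob * E)%N.
pose σ := γ3 * inv ^+ P.
have hx0 : cg (3 ^+ R) x%:Z (back inv αs σ).
  rewrite /αs /pre cat_cons /= -/(back inv (nseq Rp 1%N ++ αp) σ).
  have [k hk] := back_ones hinv αp σ (leq_trans (leqnSn Rp) hK).
  rewrite hk.
  have h1 := cg_pow3 hK (cg_mul (cg_refl (3 ^+ K) x%:Z) (cg_2inv hinv q)).
  rewrite mulr1 in h1; apply: (cg_trans (cg_sym h1)).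
  have e1 : x%:Z * (2 * inv) ^+ q = (2 ^+ q * x%:Z) * inv ^+ q by rewrite exprMn; ring.
  rewrite e1; case: hq => k2 ->.
  exists (k2 * inv ^+ q - k * inv ^+ q); rewrite exprS; ring.
have [t [uk [ht1 ht2 ht3 ht4 ht5]]] :=
  realize hc hO hOp hg hw hK hinv hx (isT : (0 < size αs)%N) hx0.
exists (P :: t); split => //.
  by rewrite /len /= ht1 size_cat /= size_nseq leq_add2l.
exists (2 ^ P * uk)%N; split.
- by rewrite muln_gt0 expn_gt0.
- by rewrite /vs ht3.
- apply: (cg_pow3 (leq_addl _ _ : (m' <= K)%N)).
  rewrite PoszM PoszX.
  have := cg_mul (cg_refl (3 ^+ K) (2 ^+ P)) ht4.
  move=> h1; apply: (cg_trans h1).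
  have := cg_mul (cg_refl (3 ^+ K) γ3) (cg_2inv hinv P).
  by rewrite mulr1 /σ exprMn => h2; rewrite mulrCA.
- have hP : (2 ^ P = 1 %[mod b])%N by rewrite /P expnM -modnXm hO modnXm exp1n.
  apply/cg_nat.
  rewrite -modnMml hP modnMml mul1n ht5 /αs /traj foldl_cat -/(traj b c pre x) -/y.
  by rewrite -/(traj b c αp y) -traj_mod hαp2 modn_mod.
- by rewrite dvdn_mulr // dvdn_exp2l // /P leq_pmull.
Qed.

End LP.


Lemma cancel3_2 (j : nat) (a b' : int) : cg (2 ^+ j) (3 * a) (3 * b') -> cg (2 ^+ j) a b'.
Proof.
case=> k hk.
have h1 : (2 ^+ j %| (a - b') * 3)%Z by apply/dvdzP; exists k; lia.
rewrite Gauss_dvdzl in h1; last by apply: coprimezXl.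
by case/dvdzP: h1 => q hq; exists q; rewrite -hq; ring.
Qed.

Section Small.
Variables (b1 c h Ob Rp : nat) (w : int) (x : nat).
Local Notation b := b1.+1.
Local Notation R := Rp.+1.
Hypotheses (hc : (3 * c = 1 %[mod b])%N) (hh : (2 * h = 1 %[mod b])%N)
  (hO : (2 ^ Ob = 1 %[mod b])%N)
  (hOp : (0 < Ob)%N) (hg : (2 : int) ^+ Ob = 1 + 3 ^+ R * w) (hw : cg 3 w 1)
  (hx : (0 < x)%N) (hx3 : ~~ (3 %| x)%N).

Let hc' : exists k : int, 3 * (c%:Z) = 1 + k * b.
Proof. by have /cg_nat := hc; rewrite PoszM. Qed.
Let hh' : exists k : int, 2 * (h%:Z) = 1 + k * b.
Proof. by have /cg_nat := hh; rewrite PoszM. Qed.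

Lemma small j : forall (m' γ2 : nat) (γ3 : int) (γb : nat), exists s, [/\ (0 < size s)%N,
  (len s <= R + b1 + j)%N & exists v : nat, [/\ (0 < v)%N, vs s x%:R = v%:R,
    cg (2 ^+ j) v%:Z γ2%:Z, cg (3 ^+ m') v%:Z γ3 & cg b v%:Z γb%:Z]].
Proof.
elim: j => [|j IH] m' γ2 γ3 γb.
  have [s [hs1 hs2 [v [hv1 hv2 hv3 hv4 hv5]]]] := LP hc hh hO hOp hg hw hx hx3 m' γ3 γb 0.
  exists s; split => //; first by rewrite addn0.
  by exists v; split => //; exists (v%:Z - γ2%:Z); rewrite expr0; ring.
case/boolP: (odd γ2) => hodd.
-
  pose g := γ2./2.
  have eγ : γ2 = (2 * g + 1)%N by rewrite /g -{1}(odd_double_half γ2) hodd; lia.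
  have [i3 hi3] := inv2_ex m'.+1.
  have [s [hs1 hs2 [y [hy1 hy2 hy3 hy4 hy5]]]] :=
    IH m'.+1 (3 * g + 2)%N ((3 * γ3 + 1) * i3) ((3 * γb + 1) * h)%N.
  case: hy4 => k hk.
  pose U := γ3 + (3 * γ3 + 1 + 2 * k) * 3 ^+ m'.
  have hU : 3 * U + 1 = 2 * y%:Z.
    rewrite /U hk.
    rewrite (_ : 2 * ((3 * γ3 + 1) * i3 + k * 3 ^+ m'.+1) = (3 * γ3 + 1) * (2 * i3) + 2 * k * 3 ^+ m'.+1); last by ring.
    by rewrite hi3 exprS; ring.
  have hU1 : 1 <= U by lia.
  have eU : Posz `|U|%N = U by rewrite gez0_abs //; lia.
  pose u := `|U|%N.
  have hu : (3 * u + 1 = 2 * y)%N.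
    by apply/eqP; rewrite -(@eqr_nat int) !natz PoszD !PoszM eU hU.
  exists (0%N :: s); split => //.
    by move: hs2; rewrite /len /=; case: (size s) hs1 => // n _; rewrite addnS.
  exists u; split.
  + by rewrite -ltz_nat eU; lia.
  + case: s hs1 hs2 hy2 => // s0 t _ _ hy2.
    by move: hy2; rewrite /vs /= => ->; apply: T1_nat.
  + apply: cancel3_2; rewrite eU.
    case: hy3 => k2 hk2.
    exists k2; rewrite eγ PoszD PoszM.
    transitivity (2 * y%:Z - 1); first by lia.
    rewrite hk2 PoszD PoszM exprS; ring.
  + by rewrite eU; exists (3 * γ3 + 1 + 2 * k).
  + rewrite eU.
    case: hy5 => k5 hk5; case: hc' => kc hkc; case: hh' => kh hkh.
    rewrite !PoszM PoszD PoszM in hk5.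
    have h3U : 3 * U = 3 * γb%:Z + b%:Z * ((3 * γb%:Z + 1) * kh + 2 * k5).
      transitivity (2 * y%:Z - 1); first by lia.
      rewrite hk5.
      transitivity ((3 * γb%:Z + 1) * (2 * h%:Z) + 2 * k5 * b%:Z - 1); first by ring.
      by rewrite hkh; ring.
    exists (kc * γb%:Z + c%:Z * ((3 * γb%:Z + 1) * kh + 2 * k5) - kc * U).
    transitivity ((3 * c%:Z) * U - kc * b%:Z * U); first by rewrite hkc; ring.
    transitivity (c%:Z * (3 * U) - kc * b%:Z * U); first by ring.
    rewrite h3U.
    transitivity ((3 * c%:Z) * γb%:Z + c%:Z * b%:Z * ((3 * γb%:Z + 1) * kh + 2 * k5) - kc * b%:Z * U); first by ring.
    by rewrite hkc; ring.
-
  pose g := γ2./2.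
  have eγ : γ2 = (2 * g)%N by rewrite /g -{1}(odd_double_half γ2) (negbTE hodd); lia.
  have [i3 hi3] := inv2_ex m'.
  have [s [hs1 hs2 [v [hv1 hv2 hv3 hv4 hv5]]]] :=
    IH m' g (γ3 * i3) (γb * h)%N.
  case: s hs1 hs2 hv2 => // s0 t _ hs2 hv2.
  exists (s0.+1 :: t); split => //.
    by move: hs2; rewrite /len /= addnS; apply: leqW.
  exists (2 * v)%N; split.
  + by rewrite muln_gt0.
  + by move: hv2; rewrite /vs /= vs_aux_S => ->; rewrite /T0inv natrM.
  + case: hv3 => k hk; exists k; rewrite eγ !PoszM hk exprS; ring.
  + case: hv4 => k hk; exists (γ3 + 2 * k); rewrite PoszM hk.
    transitivity (γ3 * (2 * i3) + 2 * k * 3 ^+ m'); first by ring.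
    by rewrite hi3; ring.
  + case: hv5 => k hk; case: hh' => kh hkh.
    exists (γb%:Z * kh + 2 * k); rewrite PoszM hk PoszM.
    transitivity (γb%:Z * (2 * h%:Z) + 2 * k * b%:Z); first by ring.
    by rewrite hkh; ring.
Qed.

End Small.


Lemma totient_leq n : (totient n <= n)%N.
Proof.
rewrite totient_count_coprime.
have : (\sum_(0 <= d < n) (coprime n d : nat) <= \sum_(0 <= d < n) 1)%N.
  by apply: leq_sum => i _; exact: leq_b1.
by rewrite sum_nat_const_nat subn0 muln1.
Qed.

Lemma params (b1 : nat) : coprime b1.+1 6 ->
  exists Ob Rp (w : int), [/\ (2 ^ Ob = 1 %[mod b1.+1])%N, (0 < Ob)%N,
    (2 : int) ^+ Ob = 1 + 3 ^+ Rp.+1 * w, cg 3 w 1 & (Rp <= 2 * b1)%N].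
Proof.
move=> hb.
have hb2 : coprime 2 b1.+1 by rewrite coprime_sym; move: hb; rewrite (_ : 6 = 2 * 3)%N // coprimeMr => /andP [].
set B := b1.+1 in hb hb2 *.
pose φ := totient B.
have hφ : (0 < φ)%N by rewrite totient_gt0.
have hE k : (2 ^ (φ * k) = 1 %[mod B])%N.
  by rewrite expnM -modnXm Euler_exp_totient // modnXm exp1n.
pose O := (φ * 2)%N.
pose N := (2 ^ O).-1.
have h2O : (4 <= 2 ^ O)%N.
  by rewrite (_ : 4 = 2 ^ 2)%N // leq_exp2l // /O; lia.
have eN : (2 ^ O = N.+1)%N by rewrite /N prednK //; lia.
have hN0 : (0 < N)%N by rewrite /N; lia.
have h3N : (3 %| N)%N.
  have : (2 ^ O = 1 %[mod 3])%N by rewrite /O mulnC expnM -modnXm (_ : 2 ^ 2 %% 3 = 1)%N // exp1n.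
  rewrite eN => /eqP h; have : (N + 1 == 0 + 1 %[mod 3])%N by rewrite addn1 add0n h.
  by rewrite eqn_modDr mod0n => /eqP h2; rewrite /dvdn h2.
pose Rn := logn 3 N.
have hRn : (0 < Rn)%N by rewrite -(pfactor_dvdn 1 (isT : prime 3) hN0) expn1.
pose w0 := (N %/ 3 ^ Rn)%N.
have eN2 : N = (w0 * 3 ^ Rn)%N by rewrite /w0 divnK // pfactor_dvdnn.
have hw0 : ~~ (3 %| w0)%N.
  apply/negP => h3.
  have : (3 ^ Rn.+1 %| N)%N by rewrite eN2 expnSr [in X in (_ %| X)%N]mulnC dvdn_pmul2l ?expn_gt0.
  by rewrite (pfactor_dvdn _ (isT : prime 3) hN0) ltnn.
have hRO : (Rn < O)%N.
  have h1 : (3 ^ Rn <= N)%N by apply: dvdn_leq => //; apply: pfactor_dvdnn.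
  have h2 : (2 ^ O <= 3 ^ O)%N by rewrite leq_exp2r // /O; lia.
  by rewrite -(ltn_exp2l _ _ (isT : (1 < 3)%N)); lia.
have hOb : (O <= 2 * B)%N by rewrite /O mulnC leq_mul2l totient_leq orbT.
have hw03 : (w0 %% 3 = 1 \/ w0 %% 3 = 2)%N.
  have : (w0 %% 3 < 3)%N by apply: ltn_pmod.
  have : (w0 %% 3 != 0)%N by move: hw0; rewrite /dvdn.
  lia.
have hgO : (2 : int) ^+ O = 1 + 3 ^+ Rn * w0%:Z.
  rewrite (_ : (2:int) = Posz 2) // (_ : (3:int) = Posz 3) // -!PoszX -PoszM (_ : (1:int) = Posz 1) // -PoszD.
  by rewrite eN eN2 addnC addn1 mulnC.
have eR : Rn = Rn.-1.+1 by rewrite prednK.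
case: hw03 => hw03.
- exists O, Rn.-1, w0%:Z; split.
  + by rewrite /O hE.
  + by rewrite /O; lia.
  + by rewrite -eR.
  + by apply/cg_nat; rewrite hw03.
  + rewrite /B in hRO hOb; lia.
- have [k hk] : cg 3 w0%:Z 2 by apply/cg_nat; rewrite hw03.
  exists (O * 2)%N, Rn.-1, (w0%:Z * (3 ^+ Rn * w0%:Z + 2)); split.
  + by rewrite /O -mulnA hE.
  + by rewrite /O; lia.
  + by rewrite exprM hgO -eR; ring.
  + rewrite hk; exists (1 + 2 * k + (2 + k * 3) ^+ 2 * 3 ^+ Rn.-1).
    by rewrite eR exprS; ring.
  + rewrite /B in hRO hOb; lia.
Qed.

Close Scope ring_scope.

Lemma b_not32 b1 : coprime b1.+1 6 -> 0 < b1 -> 3 %% b1.+1 = 2 %% b1.+1 -> False.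
Proof.
by case: b1 => [|[|[|[|b2]]]].
Qed.

Theorem mainTheorem4 (d n m b a f : nat)
  (hd : (1 < d)%N) (hdec : d = (2 ^ n * 3 ^ m * b)%N) (hb : coprime b 6)
  (ha : (a < d)%N) (hf : is_order32 b f) :
  forall x : nat, (0 < x)%N -> ~~ (3 %| x)%N ->
  exists s : seq nat, admissible x s /\
    (exists v : nat, vs s (x%:R)%R = (v%:R)%R /\ v = a %[mod d]) /\
    (len s <= 2 * (b - 1) * f + n + 1)%N.
Proof.
move=> x hx hx3.
case: b hb hdec hf => [|b1] hb hdec hf; first by rewrite /coprime gcd0n in hb.
have hb23 : coprime b1.+1 2 && coprime b1.+1 3 by rewrite -coprimeMr.
case/andP: hb23 => hb2 hb3.
pose φ := totient b1.+1.
have hφ : 0 < φ by rewrite totient_gt0.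
have hc : 3 * 3 ^ φ.-1 = 1 %[mod b1.+1].
  by rewrite -expnS prednK // Euler_exp_totient // coprime_sym.
have hh : 2 * 2 ^ φ.-1 = 1 %[mod b1.+1].
  by rewrite -expnS prednK // Euler_exp_totient // coprime_sym.
have [Ob [Rp [w [hO hOp hg hw hRp]]]] := params hb.
have [s [hs1 hs2 [v [hv1 hv2 hv3 hv4 hv5]]]] :=
  small hc hh hO hOp hg hw hx hx3 n m a a%:Z a.
exists s; split; first by split => //; exists v.
split.
  exists v; split => //.
  rewrite hdec; apply/eqP.
  have cop1 : coprime (2 ^ n) (3 ^ m) by apply: coprimeXl; apply: coprimeXr.
  have cop2 : coprime (2 ^ n * 3 ^ m) b1.+1.
    by rewrite coprimeMl !coprimeXl // coprime_sym.
  rewrite chinese_remainder // chinese_remainder //.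
  apply/andP; split; [apply/andP; split|]; apply/eqP; apply/cg_nat; rewrite ?PoszX.
  - exact: hv3.
  - exact: hv4.
  - exact: hv5.
have hf2 : 0 < b1 -> 1 < f.
  move=> hb1; case: hf => hf0 [hf1 _].
  case: f hf0 hf1 => [|[|f']] // _.
  by rewrite !expn1 => h; have := b_not32 hb hb1 h.
move: hs2; rewrite subn1 /=.
move=> hs2; apply: (leq_trans hs2).
have key : Rp.+1 + b1 <= 2 * b1 * f + 1.
  case: (posnP b1) => hb1.
    by rewrite hb1 in hRp *; rewrite leqn0 in hRp; rewrite (eqP hRp).
  have hf2' := hf2 hb1.
  have : 4 * b1 <= 2 * b1 * f by rewrite mulnC (mulnC 2) -mulnA leq_mul2l; lia.
  lia.
lia.
Qed.
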